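(* Let $E$ be a finite set and $V \subset \mathbb R^E$ a linear subspace defining an oriented matroid $M$. If $G \subset E$ is an acyclic flat of $M$, then \[ \mathcal Y_V \cap \big((\mathbb P^1_{\mathbb R})^G \times \infty^{E \setminus G}\big) = \mathcal Y_{\pi_G(V)} \times \infty^{E \setminus G}. \]
   Context: $\mathbb P^1_{\mathbb R} = \mathbb R\cup\{\infty\}$. For a linear subspace $W \subset \mathbb R^S$ ($S$ finite), $\mathcal Y_W$ denotes the closure of $W \cap \mathbb R_{\geq 0}^S$ in $(\mathbb P^1_{\mathbb R})^S$ in the analytic topology. $\pi_G : \mathbb R^E \to \mathbb R^G$ is the coordinate projection. $(\mathbb P^1_{\mathbb R})^G \times \infty^{E\setminus G}$ is the set of points of $(\mathbb P^1_{\mathbb R})^E$ with all coordinates in $E\setminus G$ equal to $\infty$. Flats of $M$ are the zero sets $\{i: v_i=0\}$ of $v \in V$; a flat $G$ is acyclic if some $v \in V$ has $v_i = 0$ for $i \in G$ and $v_i > 0$ for $i \notin G$. *)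

(* Defs.v *)
From mathcomp Require Import all_boot all_order all_algebra.
From mathcomp Require Import reals.
Import Order.TTheory GRing.Theory Num.Theory.

Set Implicit Arguments.
Unset Strict Implicit.
Unset Printing Implicit Defensive.

Local Open Scope ring_scope.

Definition is_subspace (R : realType) (E : Type) (V : (E -> R) -> Prop) : Prop :=
  [/\ V (fun _ => 0),
      (forall x y, V x -> V y -> V (fun i => x i + y i)) &
      (forall (a : R) x, V x -> V (fun i => a * x i))].

(* P^1_R = R ∪ {∞}, with None standing for ∞. *)
Definition P1 (R : realType) := option R.

(* Basic neighbourhoods of the analytic topology on P^1_R, indexed by eps > 0:
   around a finite point a : the interval (a - eps, a + eps);
   around ∞ : {∞} ∪ {x : |x| > 1/eps}. *)
Definition P1near (R : realType) (eps : R) (p q : P1 R) : Prop :=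
  match p, q with
  | Some a, Some b => `|b - a| < eps
  | Some _, None => False
  | None, Some b => eps^-1 < `|b|
  | None, None => True
  end.

(* Closure in (P^1_R)^S (S finite, product of analytic topologies):
   p is in the closure of A iff every basic neighbourhood of p meets A. *)
Definition P1closure (R : realType) (S : Type) (A : (S -> P1 R) -> Prop)
  (p : S -> P1 R) : Prop :=
  forall eps : R, 0 < eps -> exists q, A q /\ forall i, P1near eps (p i) (q i).

(* Y_W : closure of W ∩ R_{>=0}^S inside (P^1_R)^S. *)
Definition Ycl (R : realType) (S : Type) (W : (S -> R) -> Prop) : (S -> P1 R) -> Prop :=
  P1closure (fun q => exists x, [/\ W x, (forall i, 0 <= x i) & q = (fun i => Some (x i))]).

(* Flats of the oriented matroid of V: zero sets of vectors of V. *)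
Definition is_flat (R : realType) (E : finType) (V : (E -> R) -> Prop) (G : {set E}) : Prop :=
  exists v, V v /\ forall i, (v i == 0) = (i \in G).

Definition is_acyclic_flat (R : realType) (E : finType) (V : (E -> R) -> Prop)
  (G : {set E}) : Prop :=
  is_flat V G /\
  exists v, [/\ V v, (forall i, i \in G -> v i = 0) & (forall i, i \notin G -> 0 < v i)].

Definition projG (R : realType) (E : finType) (G : {set E}) (x : E -> R) :
  {i : E | i \in G} -> R := fun j => x (proj1_sig j).

Definition projV (R : realType) (E : finType) (V : (E -> R) -> Prop) (G : {set E}) :
  ({i : E | i \in G} -> R) -> Prop :=
  fun y => exists x, V x /\ y = @projG R E G x.
Arguments projV [R E] V G _.

(* Main.v *)
Require Import Defs.
From mathcomp Require Import all_boot all_order all_algebra.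
From mathcomp Require Import reals.
From mathcomp Require Import lra.
Import Order.TTheory GRing.Theory Num.Theory.
Local Open Scope ring_scope.

Theorem corollary3p4 (R : realType) (E : finType) (V : (E -> R) -> Prop)
  (G : {set E}) :
  is_subspace V -> is_acyclic_flat V G ->
  forall p : E -> P1 R,
    (Ycl V p /\ (forall i, i \notin G -> p i = None)) <->
    (Ycl (projV V G) (fun j : {i : E | i \in G} => p (proj1_sig j)) /\
     (forall i, i \notin G -> p i = None)).
Proof.
move=> [V0 VD VZ] [_ [v [Vv vG vnG]]] p; split; move=> [Yp pN]; split=> //.
- move=> eps eps0; have [q [[x [Vx x0 ->]] near]] := Yp eps eps0.
  exists (fun j : {i : E | i \in G} => Some (x (proj1_sig j))); split.
    by exists (fun j : {i : E | i \in G} => x (proj1_sig j)); split=> //; exists x.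
  by move=> j; exact: near.
- move=> eps eps0; have [q [[y [[x' [Vx' ->]] y0 ->]] near]] := Yp eps eps0.
  pose F i := (`|x' i| + eps^-1 + 1) / v i.
  pose t := \sum_(k | k \notin G) F k.
  pose x := fun i => x' i + t * v i.
  have Vx : V x by apply: VD => //; exact: VZ.
  have xG i : i \in G -> x i = x' i by move=> Hi; rewrite /x vG // mulr0 addr0.
  have xnG i : i \notin G -> eps^-1 + 1 <= x i.
    move=> Hi.
    have Fi : F i <= t.
      rewrite /t (bigD1 i) //= lerDl sumr_ge0 // => k /andP [Hk _].
      rewrite /F divr_ge0 // ?ltW ?vnG //.
      have := normr_ge0 (x' k); have : 0 < eps^-1 by rewrite invr_gt0.
      lra.
    have : F i * v i <= t * v i by rewrite ler_wpM2r // ltW ?vnG.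
    rewrite /F divfK; last by rewrite gt_eqF ?vnG.
    have := ler_norm (- x' i); rewrite normrN /x; lra.
  exists (fun i => Some (x i)); split.
    exists x; split=> // i; case: (boolP (i \in G)) => Hi.
      by rewrite xG //; exact: (y0 (exist _ i Hi)).
    have := xnG i Hi; have : 0 < eps^-1 by rewrite invr_gt0.
    lra.
  move=> i; case: (boolP (i \in G)) => Hi.
    by have := near (exist _ i Hi); rewrite /= xG.
  rewrite pN //= ger0_norm; last first.
    have := xnG i Hi; have : 0 < eps^-1 by rewrite invr_gt0.
    lra.
  have := xnG i Hi; lra.
Qed.
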